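(* Let $F_0,\dots,F_{n+1}$ be complete oriented flags in $\mathbb{R}^n$. Then there exist $x_0,\dots,x_{n+1}\in\mathbb{R}^n$ such that $$\mathrm{Or}([F_0,\dots,\widehat{F_i},\dots,\widehat{F_j},\dots,F_{n+1}])=\mathrm{Or}(x_0,\dots,\widehat{x_i},\dots,\widehat{x_j},\dots,x_{n+1})$$ for every $0\le i<j\le n+1$.
   Context: A complete oriented flag $F$ is a chain $\{0\}=F^0\subset F^1\subset\dots\subset F^n=\mathbb{R}^n$ with $\dim F^i=i$, each $F^i$ equipped with a choice of open half-space $(F^i)^+$ of $F^i$ bounded by $F^{i-1}$ (equivalently an orientation of each $F^i$: $(v_1,\dots,v_{i-1},x)$ is positive iff $(v_1,\dots,v_{i-1})$ is positive in $F^{i-1}$ and $x\in(F^i)^+$). For an oriented $k$-dimensional subspace $W$ ($0\le k\le n-1$) and complete oriented flag $F$, let $d$ be the unique integer $1\le d\le k+1$ with $F^{d-1}\subseteq W$, $F^d\not\subseteq W$; then $[W,F]$ is $W+F^d$ oriented by $(w_1,\dots,w_k,x)$ with $(w_1,\dots,w_k)$ a positive basis of $W$ and $x\in(F^d)^+$. Inductively, $[F_1]=F_1^1$ (with its orientation) and $[F_1,\dots,F_k]=[[F_1,\dots,F_{k-1}],F_k]$, an oriented $k$-dimensional subspace. For an oriented $n$-dimensional space $U$, $\mathrm{Or}(U)\in\{\pm1\}$ is the sign of its orientation relative to the canonical one of $\mathbb{R}^n$; for vectors, $\mathrm{Or}(v_1,\dots,v_n)=\operatorname{sign}\det(v_1,\dots,v_n)$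 (zero if not a basis). *)

(* Defs.v *)
From HB Require Import structures.
From mathcomp Require Import all_boot all_order all_algebra.
Set Implicit Arguments. Unset Strict Implicit. Unset Printing Implicit Defensive.
Import Order.TTheory GRing.Theory Num.Theory.
Local Open Scope ring_scope.

(* A complete oriented flag in R^n is encoded by an invertible n x n matrix F
   whose rows v_1, ..., v_n form an ordered basis: F^i = span(v_1..v_i) and
   (F^i)^+ is the open half-space of F^i (bounded by F^{i-1}) containing v_i.
   Every complete oriented flag arises this way. *)
Definition is_flag (R : fieldType) (n : nat) (F : 'M[R]_n) : bool :=
  F \in unitmx.

Definition mx_of_seq (R : fieldType) (n : nat) (s : seq 'rV[R]_n) : 'M[R]_n :=
  \matrix_(i < n) nth 0 s i.

(* An oriented k-dimensional subspace W is encoded by a positive basis s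
   (a sequence of k vectors).  [W, F] is W + F^d oriented by (s, x) with
   x in (F^d)^+, where d is least with F^d not contained in W; the vector
   v_d (row d-1 of F) is such an x.  So [W,F] is encoded by rcons s v_d. *)
Definition flag_step (R : fieldType) (n : nat) (s : seq 'rV[R]_n)
    (F : 'M[R]_n) : seq 'rV[R]_n :=
  let rs := [seq row i F | i <- enum 'I_n] in
  rcons s (nth 0 rs (find (fun v => ~~ (v <= mx_of_seq s)%MS) rs)).

(* [F_1, ..., F_k] = [[F_1, ..., F_{k-1}], F_k], with [F_1] = F_1^1
   (which equals [0, F_1] since d = 1 for W = {0}). *)
Definition flag_bracket (R : fieldType) (n : nat) (Fs : seq 'M[R]_n)
    : seq 'rV[R]_n :=
  foldl (@flag_step R n) [::] Fs.

Definition Or_vecs (R : realFieldType) (n : nat) (s : seq 'rV[R]_n) : R :=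
  Num.sg (\det (mx_of_seq s)).

Definition omit2 (T : Type) (m : nat) (a : 'I_m -> T) (i j : 'I_m) : seq T :=
  [seq a k | k <- enum 'I_m & (k != i) && (k != j)].

(* Main.v *)
Require Import Defs.
From HB Require Import structures.
From mathcomp Require Import all_boot all_order all_algebra perm.
Set Implicit Arguments. Unset Strict Implicit. Unset Printing Implicit Defensive.
Import Order.TTheory GRing.Theory Num.Theory.
Local Open Scope ring_scope.

Definition rowsOf (R : fieldType) n (M : 'M[R]_n) := [seq row i M | i <- enum 'I_n].

Lemma size_foldl_fs (R : fieldType) n (b : seq 'rV[R]_n) s :
  size (foldl (@flag_step R n) b s) = (size b + size s)%N.
Proof.
elim: s b => [|x s IH] b /=; first by rewrite addn0.
by rewrite IH /flag_step size_rcons addSnnS.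
Qed.

Lemma take_foldl_fs (R : fieldType) n (b : seq 'rV[R]_n) s :
  take (size b) (foldl (@flag_step R n) b s) = b.
Proof.
suff [r ->] : exists r, foldl (@flag_step R n) b s = b ++ r by rewrite take_size_cat.
elim: s b => [|x s IH] b /=; first by exists [::]; rewrite cats0.
have [r ->] := IH (flag_step b x).
by rewrite /flag_step -cats1 -catA; eexists.
Qed.

Lemma fb_take (R : fieldType) n (s : seq 'M[R]_n) k : (k <= size s)%N ->
  take k (flag_bracket s) = flag_bracket (take k s).
Proof.
move=> hk; rewrite -{1}(cat_take_drop k s) /flag_bracket foldl_cat.
have hs : size (foldl (flag_step (n:=n)) [::] (take k s)) = k.
  by rewrite size_foldl_fs size_take /=; case: ltngtP hk => // ->.
by rewrite -{1}hs take_foldl_fs.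
Qed.

Lemma size_fb (R : fieldType) n (s : seq 'M[R]_n) : size (flag_bracket s) = size s.
Proof. by rewrite /flag_bracket size_foldl_fs. Qed.

Definition gpred (R : fieldType) n (s : seq 'M[R]_n) k :=
  (fun v : 'rV[R]_n => ~~ (v <= mx_of_seq (take k (flag_bracket s)))%MS).

Lemma fb_nth (R : fieldType) n (s : seq 'M[R]_n) k : (k < size s)%N ->
  nth 0 (flag_bracket s) k =
  nth 0 (rowsOf (nth 0 s k)) (find (gpred s k) (rowsOf (nth 0 s k))).
Proof.
move=> hk.
have e : take k (flag_bracket s) = flag_bracket (take k s) by apply: fb_take; apply: ltnW.
rewrite /gpred e.
rewrite -(nth_take 0 (ltnSn k)).
rewrite fb_take //.
rewrite (take_nth 0 hk).
rewrite /flag_bracket foldl_rcons.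
set b := foldl _ _ _.
have hb : size b = k by rewrite /b size_foldl_fs size_take hk.
rewrite /flag_step nth_rcons hb ltnn eqxx.
by [].
Qed.

Lemma row_mx_of_seq (R : fieldType) n (l : seq 'rV[R]_n) (r : 'I_n) :
  row r (mx_of_seq l) = nth 0 l r.
Proof. by rewrite /mx_of_seq rowK. Qed.

Lemma nth_rowsOf (R : fieldType) n (M : 'M[R]_n) (i : 'I_n) :
  nth 0 (rowsOf M) i = row i M.
Proof.
rewrite /rowsOf (nth_map i) ?size_enum_ord //; congr row.
by apply: val_inj; rewrite /= nth_enum_ord.
Qed.

Lemma row_row'_sub (R : fieldType) m n (M : 'M[R]_(m, n)) (k0 r : 'I_m) :
  r != k0 -> (row r M <= row' k0 M)%MS.
Proof.
case: (unliftP k0 r) => [r' ->|->]; last by rewrite eqxx.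
move=> _.
have -> : row (lift k0 r') M = row r' (row' k0 M) by apply/rowP => c; rewrite !mxE.
exact: row_sub.
Qed.

Lemma has_gpred (R : fieldType) n (s : seq 'M[R]_n) k : (k < n)%N ->
  nth 0 s k \in unitmx -> has (gpred s k) (rowsOf (nth 0 s k)).
Proof.
move=> hk hu; apply/negPn/negP => hn.
set A := mx_of_seq (take k (flag_bracket s)).
have sub : (nth 0 s k <= A)%MS.
  apply/row_subP => i.
  move/hasPn: hn => /(_ (row i (nth 0 s k))).
  rewrite /gpred negbK; apply.
  by rewrite -nth_rowsOf mem_nth // size_map size_enum_ord.
have := mxrankS sub; rewrite mxrank_unit //.
have nf : ~~ row_free A.
  apply/row_freePn; exists (Ordinal hk).
  by rewrite row_mx_of_seq nth_default ?sub0mx //= size_take_min geq_minl.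
move: nf; rewrite /row_free => nf hle.
by move: nf; rewrite eqn_leq hle rank_leq_row.
Qed.

Lemma gexists (R : fieldType) n (s : seq 'M[R]_n) (k : 'I_n) :
  (k < size s)%N -> nth 0 s k \in unitmx ->
  exists gk : 'I_n, [/\ nth 0 (flag_bracket s) k = row gk (nth 0 s k),
     gpred s k (row gk (nth 0 s k)) &
     forall i : 'I_n, (i < gk)%N -> ~~ gpred s k (row i (nth 0 s k))].
Proof.
move=> hks hu.
have := has_gpred (ltn_ord k) hu; rewrite has_find size_map size_enum_ord => hm.
exists (Ordinal hm); split.
- by rewrite fb_nth // -(nth_rowsOf _ (Ordinal hm)).
- by rewrite -(nth_rowsOf _ (Ordinal hm)) nth_find // has_find size_map size_enum_ord.
- move=> i hi; rewrite -nth_rowsOf before_find //.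
Qed.

Lemma fb_chain (R : fieldType) n (s : seq 'M[R]_n) :
  size s = n -> (forall k : 'I_n, nth 0 s k \in unitmx) ->
  forall k, (k <= n)%N -> (k <= \rank (mx_of_seq (take k (flag_bracket s))))%N.
Proof.
move=> hs hu; elim=> [|k IH] hk //.
have hkn : (k < n)%N := hk.
have hks : (k < size s)%N by rewrite hs.
have [gk [e1 e2 _]] := gexists (k := Ordinal hkn) hks (hu (Ordinal hkn)).
set A := mx_of_seq (take k (flag_bracket s)).
set A' := mx_of_seq (take k.+1 (flag_bracket s)).
have lt : (A < A')%MS.
  rewrite ltmxE; apply/andP; split.
    apply/row_subP => r; rewrite /A row_mx_of_seq.
    case: (ltnP r k) => hr.
      rewrite nth_take // -(nth_take 0 (ltn_trans hr (ltnSn k))) -row_mx_of_seq.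
      exact: row_sub.
    by rewrite nth_default ?sub0mx // size_take_min geq_min hr.
  apply/negP => h.
  have := submx_trans (row_sub (Ordinal hkn) A') h.
  rewrite /A' row_mx_of_seq /= nth_take // e1.
  by move: e2; rewrite /gpred => /negP.
have := rank_ltmx lt; have := IH (ltnW hk).
exact: leq_ltn_trans.
Qed.

Lemma fb_det_neq0 (R : fieldType) n (s : seq 'M[R]_n) :
  size s = n -> (forall k : 'I_n, nth 0 s k \in unitmx) ->
  \det (mx_of_seq (flag_bracket s)) != 0.
Proof.
move=> hs hu.
have := fb_chain hs hu (leqnn n).
rewrite take_oversize ?size_fb ?hs // => h.
have : row_free (mx_of_seq (flag_bracket s)).
  by rewrite /row_free eqn_leq rank_leq_row h.
by rewrite row_free_unit unitmxE unitfE.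
Qed.

Lemma gfun_exists (R : fieldType) n (s : seq 'M[R]_n) :
  size s = n -> (forall k : 'I_n, nth 0 s k \in unitmx) ->
  exists g : 'I_n -> 'I_n, forall k : 'I_n,
    nth 0 (flag_bracket s) k = row (g k) (nth 0 s k) /\
    forall i : 'I_n, (i < g k)%N -> ~~ gpred s k (row i (nth 0 s k)).
Proof.
move=> hs hu.
have H : forall k : 'I_n, exists gk : 'I_n,
    nth 0 (flag_bracket s) k = row gk (nth 0 s k) /\
    forall i : 'I_n, (i < gk)%N -> ~~ gpred s k (row i (nth 0 s k)).
  move=> k; have hks : (k < size s)%N by rewrite hs.
  by have [gk [e1 _ e3]] := gexists hks (hu k); exists gk.
have [g hg] := fin_all_exists H; by exists g.
Qed.

Lemma det_f_zero (R : fieldType) n (s : seq 'M[R]_n) (g f : 'I_n -> 'I_n) (k0 : 'I_n) :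
  (forall k : 'I_n, nth 0 (flag_bracket s) k = row (g k) (nth 0 s k) /\
    forall i : 'I_n, (i < g k)%N -> ~~ gpred s k (row i (nth 0 s k))) ->
  (forall k : 'I_n, (k < k0)%N -> f k = g k) -> (f k0 < g k0)%N ->
  \det (\matrix_(k < n) row (f k) (nth 0 s k)) = 0.
Proof.
move=> hg hfg hlt.
set M := \matrix_(k < n) row (f k) (nth 0 s k).
suff : ~~ row_free M.
  by rewrite row_free_unit unitmxE unitfE negbK => /eqP.
apply/row_freePn; exists k0.
have h1 := (proj2 (hg k0)) _ hlt.
move: h1; rewrite /gpred negbK => h1.
have -> : row k0 M = row (f k0) (nth 0 s k0) by rewrite /M rowK.
suff h2 : (mx_of_seq (take k0 (flag_bracket s)) <= row' k0 M)%MS by exact: submx_trans h1 h2.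
apply/row_subP => r; rewrite row_mx_of_seq.
case: (ltnP r k0) => hr.
  rewrite nth_take // (proj1 (hg r)) -hfg //.
  have -> : row (f r) (nth 0 s r) = row r M by rewrite /M rowK.
  by apply: row_row'_sub; rewrite neq_ltn hr.
by rewrite nth_default ?sub0mx // size_take_min geq_min hr.
Qed.
Local Open Scope nat_scope.
Lemma split3 n (k0 : 'I_n) (e : 'I_n -> nat) :
  \sum_k e k = \sum_(k : 'I_n | (k < k0)%N) e k + (e k0 + \sum_(k : 'I_n | (k0 < k)%N) e k).
Proof.
rewrite (bigID (fun k : 'I_n => (k < k0)%N)) /=; congr (_ + _).
rewrite (bigD1 k0) /= ?ltnn //; congr (_ + _).
apply: eq_bigl => k /=; rewrite -leqNgt ltn_neqAle andbC.
by congr (_ && _); rewrite eq_sym.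
Qed.

Lemma val_lt n (w : 'I_n -> nat) (f g : 'I_n -> 'I_n) (k0 : 'I_n) :
 (forall k : 'I_n, 0 < w k) ->
 (forall k : 'I_n, k0 < k -> n * n * w k < w k0) ->
 (forall k : 'I_n, k < k0 -> f k = g k) -> g k0 < f k0 ->
 \sum_k w k * g k < \sum_k w k * f k.
Proof.
move=> wpos wdom hfg hlt.
rewrite (split3 k0 (fun k => w k * g k)) (split3 k0 (fun k => w k * f k)).
have -> : \sum_(k : 'I_n | k < k0) w k * f k = \sum_(k : 'I_n | k < k0) w k * g k.
  by apply: eq_bigr => k hk; rewrite hfg.
rewrite ltn_add2l.
have n0 : 0 < n by apply: leq_ltn_trans (ltn_ord k0).
suff hQ : \sum_(k : 'I_n | k0 < k) w k * g k < w k0.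
  apply: (@leq_trans (w k0 * f k0)); last exact: leq_addr.
  apply: (@leq_trans (w k0 * (g k0).+1)); last by rewrite leq_mul2l hlt orbT.
  by rewrite mulnS addnC ltn_add2r.
rewrite -(ltn_pmul2l n0) big_distrr /=.
apply: (@leq_ltn_trans (\sum_(k : 'I_n | k0 < k) (w k0).-1)).
  apply: leq_sum => k hk.
  rewrite -ltnS prednK ?wpos //.
  apply: leq_ltn_trans (wdom k hk).
  rewrite -mulnA leq_mul2l; apply/orP; right.
  rewrite [X in _ <= X]mulnC leq_mul2l; apply/orP; right.
  exact: ltnW.
apply: (@leq_ltn_trans (\sum_k (w k0).-1)).
  rewrite [X in _ <= X](bigID (fun k : 'I_n => k0 < k)) /=; exact: leq_addr.
rewrite sum_nat_const (_ : #|_| = n); last exact: card_ord.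
by rewrite ltn_pmul2l // ltn_predL wpos.
Qed.
Local Open Scope ring_scope.
Lemma det_expand (R : comNzRingType) n (G : 'I_n -> 'M[R]_n) (p : 'I_n -> 'I_n -> R) :
  \det (\matrix_(k < n) \sum_(i < n) p k i *: row i (G k)) =
  \sum_(f : {ffun 'I_n -> 'I_n}) (\prod_k p k (f k)) * \det (\matrix_(k < n) row (f k) (G k)).
Proof.
rewrite /determinant.
have E1 : forall s : 'S_n,
  \prod_k (\matrix_(k < n) \sum_(i < n) p k i *: row i (G k)) k (s k) =
  \sum_(f : {ffun 'I_n -> 'I_n}) (\prod_k p k (f k)) * \prod_k G k (f k) (s k).
  move=> s.
  under [RHS]eq_bigr => f _ do rewrite -big_split /=.
  rewrite -(bigA_distr_bigA (fun k i => p k i * G k i (s k))) /=.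
  apply: eq_bigr => k _; rewrite !mxE summxE; apply: eq_bigr => i _.
  by rewrite !mxE.
under eq_bigr => s _ do rewrite E1 big_distrr /=.
rewrite exchange_big /=; apply: eq_bigr => f _.
rewrite big_distrr /=; apply: eq_bigr => s _.
rewrite mulrCA; congr (_ * (_ * _)); apply: eq_bigr => k _.
by rewrite !mxE.
Qed.
Lemma sg_close (R : realDomainType) (x y : R) : `|x - y| < `|y| -> Num.sg x = Num.sg y.
Proof.
move=> h; case: (ltrgt0P y) => hy.
- rewrite (gtr0_sg hy) gtr0_sg //.
  have h2 := ler_norm (y - x); rewrite distrC in h2.
  have := le_lt_trans h2 h; rewrite gtr0_norm // ltrBlDr ltrDl //.
- rewrite (ltr0_sg hy) ltr0_sg //.
  have h2 := ler_norm (x - y).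
  have := le_lt_trans h2 h; rewrite ltr0_norm // ltrBlDr addNr //.
- by move: h; rewrite hy normr0 normr_lt0.
Qed.

Definition Cst (R : realFieldType) n (s : seq 'M[R]_n) : R :=
  \sum_(f : {ffun 'I_n -> 'I_n}) `|\det (\matrix_(k < n) row (f k) (nth 0 s k))|.

Lemma core (R : realFieldType) n (s : seq 'M[R]_n) (w : 'I_n -> nat) (t : R) :
  size s = n -> (forall k : 'I_n, nth 0 s k \in unitmx) ->
  (forall k : 'I_n, (0 < w k)%N) ->
  (forall k k' : 'I_n, (k < k')%N -> (n * n * w k' < w k)%N) ->
  0 < t -> t <= 1 ->
  t * Cst s < `|\det (mx_of_seq (flag_bracket s))| ->
  Num.sg (\det (\matrix_(k < n) \sum_(i < n) t ^+ (w k * i) *: row i (nth 0 s k)))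
  = Num.sg (\det (mx_of_seq (flag_bracket s))).
Proof.
move=> hs hu wpos wdom t0 t1 tC.
have [g hg] := gfun_exists hs hu.
set d := fun f : {ffun 'I_n -> 'I_n} => \det (\matrix_(k < n) row (f k) (nth 0 s k)).
set gf := [ffun k => g k].
have eD : \det (mx_of_seq (flag_bracket s)) = d gf.
  rewrite /d; congr (\det _); apply/row_matrixP => k.
  by rewrite row_mx_of_seq rowK ffunE (proj1 (hg k)).
rewrite eD in tC *.
rewrite (det_expand (fun k => nth 0 s k) (fun k i => t ^+ (w k * i))).
rewrite (bigD1 gf) //=.
set V := (\sum_k w k * g k)%N.
have eA : \prod_k t ^+ (w k * gf k) = t ^+ V.
  by rewrite prodrXr; congr (_ ^+ _); apply: eq_bigr => k _; rewrite ffunE.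
rewrite eA.
set B := \sum_(f | f != gf) _.
have tV0 : 0 < t ^+ V := exprn_gt0 V t0.
have hB : `|B| <= t ^+ V.+1 * Cst s.
  apply: (le_trans (ler_norm_sum _ _ _)).
  apply: (@le_trans _ _ (\sum_(f | f != gf) t ^+ V.+1 * `|d f|)).
    apply: ler_sum => f hf.
    rewrite normrM ger0_norm; last by rewrite prodrXr exprn_ge0 // ltW.
    have [df0|dfn0] := eqVneq (d f) 0.
      by rewrite /d in df0 *; rewrite df0 normr0 !mulr0.
    apply: ler_wpM2r; first exact: normr_ge0.
    rewrite prodrXr; apply: ler_wiXn2l; [exact: ltW | exact: t1 |].
    have [k1 hk1] : exists k, f k != g k.
      case: (pickP (fun k => f k != g k)) => [k1 hk1|none]; first by exists k1.
      move/eqP: hf; case; apply/ffunP => k; rewrite ffunE.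
      by have := none k; move/negbFE/eqP.
    case: (@arg_minnP _ k1 (fun k => f k != g k) (fun k : 'I_n => nat_of_ord k) hk1) => k0 hk0 hmin.
    have hfg : forall k : 'I_n, (k < k0)%N -> f k = g k.
      move=> k hk; apply/eqP; apply/negPn/negP => hne.
      by have := hmin k hne; rewrite leqNgt hk.
    case: (ltngtP (f k0) (g k0)) => h.
    - by move/eqP: dfn0; case; apply: det_f_zero hg hfg h.
    - by apply: val_lt wpos _ hfg h => k hk; apply: wdom.
    - by move: hk0; rewrite (val_inj h) eqxx.
  rewrite -big_distrr /=; apply: ler_wpM2l; first by rewrite exprn_ge0 // ltW.
  by rewrite /Cst [X in _ <= X](bigD1 gf) //= /d lerDr normr_ge0.
rewrite -[RHS](_ : Num.sg (t ^+ V * d gf) = _); last by rewrite sgrM gtr0_sg // mul1r.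
apply: sg_close; rewrite addrAC subrr add0r.
apply: (le_lt_trans hB).
rewrite normrM (gtr0_norm tV0) exprS -mulrA mulrCA ltr_pM2l //.
Qed.
Lemma size_filter_enum (T : finType) (P : pred T) : size (filter P (enum T)) = #|P|.
Proof. rewrite cardE /enum_mem size_filter /= count_filter size_filter. by apply: eq_count => x /=; rewrite andbT. Qed.

Lemma size_L m (i j : 'I_m) : i != j ->
  size [seq k <- enum 'I_m | (k != i) && (k != j)] = (m - 2)%N.
Proof.
move=> hij; rewrite size_filter_enum.
have H := cardC [set i; j]; rewrite cards2 hij card_ord in H.
have E : #|[pred k : 'I_m | (k != i) && (k != j)]| = #|[predC [set i; j]]|.
  by apply: eq_card => k; rewrite !inE negb_or.
rewrite E; move: H; move: #|[predC _]| => c <-.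
by rewrite add2n subSS subSS subn0.
Qed.

Lemma sorted_L m (P : pred 'I_m) :
  sorted (relpre val ltn) [seq k <- enum 'I_m | P k].
Proof.
apply: sorted_filter; first by move=> a b c; exact: ltn_trans.
by rewrite -sorted_map val_enum_ord iota_ltn_sorted.
Qed.

Lemma le_sum2 (R : numDomainType) m (f : 'I_m -> 'I_m -> R) i j :
  (forall a b, 0 <= f a b) -> f i j <= \sum_a \sum_b f a b.
Proof.
move=> h; rewrite (bigD1 i) //= (bigD1 j) //= -addrA lerDl addr_ge0 //.
  by apply: sumr_ge0.
by apply: sumr_ge0 => a _; apply: sumr_ge0.
Qed.

Lemma Wdom n (a b : 'I_n.+2) : (a < b)%N ->
  (n * n * (n * n).+1 ^ (n.+1 - b) < (n * n).+1 ^ (n.+1 - a))%N.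
Proof.
move=> hab.
have hb : (b <= n.+1)%N by rewrite -ltnS.
apply: (@leq_trans ((n * n).+1 ^ (n.+1 - b).+1)).
  rewrite expnSr mulnS mulnC -[X in (X < _)%N]add0n ltn_add2r.
  by rewrite expn_gt0.
rewrite leq_pexp2l // -subSn // -[(n.+1 - a)%N]subSS.
exact: leq_sub2l.
Qed.

Unset Implicit Arguments.
Theorem proposition4p4 (R : rcfType) (n : nat)
    (F : 'I_n.+2 -> 'M[R]_n) (hF : forall k, is_flag (F k)) :
  exists x : 'I_n.+2 -> 'rV[R]_n,
    forall i j : 'I_n.+2, (i < j)%N ->
      Or_vecs (flag_bracket (omit2 F i j)) = Or_vecs (omit2 x i j).
Proof.
set C := fun i j => Cst (omit2 F i j).
set D := fun i j => `|\det (mx_of_seq (flag_bracket (omit2 F i j)))|.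
set S := \sum_(i : 'I_n.+2) \sum_(j : 'I_n.+2) C i j / D i j.
set t := (1 + S)^-1.
set W := fun a : 'I_n.+2 => ((n * n).+1 ^ (n.+1 - a))%N.
exists (fun a => \sum_(i < n) t ^+ (W a * i) *: row i (F a)).
move=> i j hij.
have hij' : i != j by rewrite neq_ltn hij.
set L := [seq k <- enum 'I_n.+2 | (k != i) && (k != j)].
have hL : size L = n by rewrite size_L // subSS subSS subn0.
have hS0 : 0 <= S.
  apply: sumr_ge0 => a _; apply: sumr_ge0 => b _.
  by apply: divr_ge0; [apply: sumr_ge0 => f _ | exact: normr_ge0].
have hS1 : 0 < 1 + S by apply: (@lt_le_trans _ _ 1) => //; rewrite lerDl.
have t0 : 0 < t by rewrite invr_gt0.
have t1 : t <= 1 by rewrite invf_le1 // lerDl.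
have homit : omit2 F i j = [seq F k | k <- L] by [].
have hsz : size (omit2 F i j) = n by rewrite homit size_map.
have hnth : forall k : 'I_n, nth 0 (omit2 F i j) k = F (nth i L k).
  by move=> k; rewrite homit (nth_map i) // hL.
have hu : forall k : 'I_n, nth 0 (omit2 F i j) k \in unitmx.
  by move=> k; rewrite hnth; apply: hF.
have Dpos : 0 < D i j by rewrite normr_gt0 fb_det_neq0.
have tC : t * C i j < D i j.
  rewrite mulrC ltr_pdivrMr // mulrDr mulr1.
  apply: (@lt_le_trans _ _ (D i j + C i j)).
    by rewrite ltrDr.
  rewrite lerD2l.
  have : C i j / D i j <= S.
    apply: (@le_sum2 _ _ (fun a b => C a b / D a b)) => a b; apply: divr_ge0; first by apply: sumr_ge0.
    exact: normr_ge0.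
  move/(ler_wpM2l (ltW Dpos)).
  by rewrite mulrCA divff ?mulr1 // gt_eqF.
have := @core R n (omit2 F i j) (fun k => W (nth i L k)) t hsz hu _ _ t0 t1 tC.
rewrite /Or_vecs => <-.
- congr (Num.sg (\det _)); apply/row_matrixP => k.
  rewrite row_mx_of_seq rowK hnth /omit2 (nth_map i) ?hL //.
- by move=> k; rewrite expn_gt0.
- move=> k k' hkk'; apply: Wdom.
  have := sorted_ltn_nth _ i (sorted_L (fun k => (k != i) && (k != j))).
  apply; rewrite ?inE ?hL //=; first exact: ltn_trans.
Qed.
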